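(* Let $k\ge1$ be an integer and let $p=p(n)$ satisfy \[2\frac{\log(n)+\omega(n)}{n}\le p\le 1-(k+1)\frac{\log(n)+\omega(n)}{n}\] for some sequence $\omega(n)\to\infty$. Let $F(x,y)=x^{k+1}\big(y+(1-y)^{k+1}\big)^{x-k-1}$. Then $\lim_{n\to\infty}F(n,p(n))=0$.
   Context: $\log$ is the natural logarithm. *)

(* Defs.v *)
From Stdlib Require Import Reals ZArith.
From Coquelicot Require Import Coquelicot.
Open Scope R_scope.

(* F(x,y) = x^(k+1) * (y + (1-y)^(k+1))^(x-k-1), evaluated at a natural x = n;
   the exponent x-k-1 is an integer (possibly negative for small n). *)
Definition F (k : nat) (x : nat) (y : R) : R :=
  INR x ^ (k + 1) * powerRZ (y + (1 - y) ^ (k + 1)) (Z.of_nat x - Z.of_nat k - 1)%Z.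

(* Main.v *)
Require Import Defs.
From Stdlib Require Import Reals ZArith Lra Lia Psatz.
From Coquelicot Require Import Coquelicot.
Open Scope R_scope.

Lemma pow_le_one' (q : R) (k : nat) : 0 <= q <= 1 -> q ^ k <= 1.
Proof. intros H. rewrite <- (pow1 k). apply pow_incr. lra. Qed.

Lemma L_exp_pow (y : R) (m : nat) : exp y ^ m = exp (INR m * y).
Proof.
  induction m as [|m IH].
  - simpl. rewrite Rmult_0_l, exp_0. reflexivity.
  - rewrite S_INR. simpl. rewrite IH. rewrite <- exp_plus. f_equal. ring.
Qed.

Lemma L_bern (t : R) (k : nat) : 0 <= t <= 1 -> (1 - t) ^ k * (1 + INR k * t) <= 1.
Proof.
  intros Ht. induction k as [|k IH].
  - simpl. lra.
  - rewrite S_INR. simpl.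
    assert (0 <= (1 - t) ^ k) by (apply pow_le; lra).
    assert (0 <= INR k) by apply pos_INR.
    assert (0 <= (1 - t) ^ k * (t * t * (INR k + 1))).
    { apply Rmult_le_pos; [lra|]. apply Rmult_le_pos; nra. }
    nra.
Qed.

Lemma L_h (k : nat) (a b q : R) : (1 <= k)%nat -> 0 <= b -> b <= a -> a <= 1 ->
  a <= q -> q <= 1 - b ->
  q - q ^ (k + 1) >= a * (1 - a) \/ (1 + INR k * a) * (q - q ^ (k + 1)) >= (1 - a) * INR k * b.
Proof.
  intros hk hb hba ha1 haq hqb.
  destruct (Rle_dec q (1 - a)) as [H1|H1].
  - left.
    assert (q ^ (k + 1) <= q * q).
    { replace (k + 1)%nat with (2 + (k - 1))%nat by lia. rewrite pow_add. simpl.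
      assert (q ^ (k - 1) <= 1) by (apply pow_le_one'; lra).
      assert (0 <= q * (q * 1)) by nra. nra. }
    nra.
  - right.
    set (t := 1 - q).
    assert (Hb := L_bern t k).
    replace (1 - t) with q in Hb by (unfold t; ring).
    assert (0 <= INR k) by apply pos_INR.
    assert (hq1 : q ^ k <= 1) by (apply pow_le_one'; lra).
    assert (hq0 : 0 <= q ^ k) by (apply pow_le; lra).
    assert (Hb' : q ^ k * (1 + INR k * t) <= 1) by (apply Hb; unfold t; lra).
    rewrite pow_add. simpl pow at 2. 
    assert (E: (1 + INR k * a) * (1 - q ^ k) >= INR k * b).
    { assert ((1 + INR k * a) * (1 - q ^ k) >= (1 + INR k * t) * (1 - q ^ k)).
      { apply Rle_ge, Rmult_le_compat_r; [lra|]. unfold t. nra. }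
      unfold t in *. nra. }
    replace (q - q ^ k * (q * 1)) with (q * (1 - q ^ k)) by ring.
    assert (0 <= 1 - q ^ k) by lra.
    assert (0 <= 1 - a) by lra.
    assert (INR k * b >= 0) by nra.
    nra.
Qed.
Definition CC (K : R) : R :=
  4 * (K + 1) ^ 2 * (4 * (K + 1) * ((K + 1) * (K + 3) + 1) ^ 2 + 1).

Lemma L_ar (K c l w : R) :
  1 <= K -> 0 <= c <= 1/4 -> 0 <= l -> 0 <= w ->
  c * (l + w) * (K + 3) <= K + 1 -> c * l * l <= 4 * (K + 1) ->
  let L := l + w in let a := c * L in let Z := w / (2 * (K + 3)) - CC K in
  (1 - c) * (K + 1) * L * (1 - a) - (K + 1) * l >= Z /\
  (1 - c) * (1 - a) * K * (2 * L) >= (1 + K * a) * ((K + 1) * l + Z).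
Proof.
  intros HK Hc Hl Hw Ha Hl2 L a Z.
  set (M := (K + 1) * (K + 3)).
  set (K0 := 4 * (K + 1) * (M + 1) ^ 2).
  assert (HL : 0 <= L) by (unfold L; lra).
  assert (Ha0 : 0 <= a) by (unfold a; nra).
  assert (Ha1 : a * (K + 3) <= K + 1) by (unfold a, L; lra).
  assert (Ha2 : a <= 1) by nra.
  assert (HM : 1 <= M) by (unfold M; nra).
  assert (HK0 : 0 <= K0) by (unfold K0; assert (0 <= (M+1)^2) by (apply pow_le; lra); nra).
  assert (HCC : CC K = 4 * (K + 1) ^ 2 * (K0 + 1)) by (unfold CC, K0, M; ring).
  assert (HK3 : 0 < 2 * (K + 3)) by lra.
  destruct (Rle_dec w (M * l)) as [Hs|Hs].
  -
    assert (HLl : L <= (M + 1) * l) by (unfold L; lra).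
    assert (HaL : a * L <= K0).
    { unfold a. replace (c * L * L) with (c * (L * L)) by ring.
      assert (L * L <= (M + 1) ^ 2 * (l * l)) by (simpl; nra).
      assert (c * (L * L) <= c * ((M + 1) ^ 2 * (l * l))) by (apply Rmult_le_compat_l; lra).
      assert (0 <= (M + 1) ^ 2) by (apply pow_le; lra).
      unfold K0. nra. }
    assert (HZ : Z <= w - CC K).
    { unfold Z. assert (w / (2 * (K + 3)) <= w).
      { apply Rmult_le_reg_r with (2 * (K + 3)); [lra|].
        unfold Rdiv. rewrite Rmult_assoc, Rinv_l by lra. nra. }
      lra. }
    assert (Hsq : (K + 1) ^ 2 = (K + 1) * (K + 1)) by ring.
    split.
    + assert (0 <= c * a) by nra.
      assert (Q1 : (1 - c) * (1 - a) >= 1 - c - a) by nra.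
      assert ((1 - c) * L * (1 - a) >= L - c * L - a * L).
      { replace ((1 - c) * L * (1 - a)) with (L * ((1 - c) * (1 - a))) by ring.
        replace (L - c * L - a * L) with (L * (1 - c - a)) by ring.
        apply Rle_ge, Rmult_le_compat_l; lra. }
      assert (Hca : c * L = a) by reflexivity.
      assert (X : (1 - c) * L * (1 - a) - l >= w - 1 - K0) by (unfold L in *; lra).
      assert ((1 - c) * (K + 1) * L * (1 - a) - (K + 1) * l =
              (K + 1) * ((1 - c) * L * (1 - a) - l)) by ring.
      assert ((K + 1) * ((1 - c) * L * (1 - a) - l) >= (K + 1) * (w - 1 - K0)) by nra.
      assert (CC K >= (K + 1) * (1 + K0) ) by (rewrite HCC; nra).
      nra.
    + assert (H1 : (1 - c) * (1 - a) >= (1 + K * a) * (1 - c - (K + 1) * a)).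
      { assert (0 <= a * c) by nra. assert (0 <= K * (a * c)) by nra.
        assert (0 <= K * (K + 1) * (a * a)) by (apply Rmult_le_pos; nra).
        assert (E : (1 - c) * (1 - a) - (1 + K * a) * (1 - c - (K + 1) * a) =
          a * c + K * (a * c) + K * (K + 1) * (a * a)) by ring.
        lra. }
      assert (H2 : (1 - c) * (1 - a) * K * (2 * L) >= (1 + K * a) * (1 - c - (K + 1) * a) * K * (2 * L)).
      { assert (0 <= K * (2 * L)) by nra. nra. }
      assert (H3 : (1 - c - (K + 1) * a) * K * (2 * L) >= (K + 1) * l + (w - CC K)).
      { assert (Hca : c * L = a) by reflexivity.
        assert (E : (1 - c - (K + 1) * a) * K * (2 * L) =
          2 * K * L - 2 * K * a - 2 * K * (K + 1) * (a * L)) by (rewrite <- Hca; ring).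
        rewrite E.
        assert (2 * K * (K + 1) * (a * L) <= 2 * K * (K + 1) * K0).
        { apply Rmult_le_compat_l; [nra|lra]. }
        assert (CC K >= 2 * K + 2 * K * (K + 1) * K0) by (rewrite HCC; nra).
        assert (K * a <= K) by nra. assert (0 <= (K - 1) * l) by nra.
        assert (0 <= (2 * K - 1) * w) by nra.
        assert (HLe : L = l + w) by reflexivity.
        rewrite HLe at 1. lra. }
      assert (H4 : (1 + K * a) * ((K + 1) * l + Z) <= (1 + K * a) * ((K + 1) * l + (w - CC K))).
      { apply Rmult_le_compat_l; nra. }
      assert (H5 : (1 + K * a) * ((1 - c - (K + 1) * a) * K * (2 * L)) >=
                   (1 + K * a) * ((K + 1) * l + (w - CC K))).
      { apply Rle_ge, Rmult_le_compat_l; nra. }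
      assert (E5 : (1 + K * a) * (1 - c - (K + 1) * a) * K * (2 * L) =
                   (1 + K * a) * ((1 - c - (K + 1) * a) * K * (2 * L))) by ring.
      lra.
  -
    assert (Hlw : M * l < w) by lra.
    assert (HKl : (K + 1) * l * (K + 3) <= L).
    { unfold L. unfold M in Hlw. nra. }
    assert (Hca : (1 - c) * (1 - a) * (2 * (K + 3)) >= 3).
    { nra. }
    assert (HZL : Z * (2 * (K + 3)) <= L).
    { unfold Z. unfold Rminus. rewrite Rmult_plus_distr_r.
      unfold Rdiv. rewrite Rmult_assoc, Rinv_l by lra.
      assert (0 <= CC K) by (rewrite HCC; nra). unfold L. nra. }
    split.
    + apply Rle_ge.
      apply Rmult_le_reg_r with (2 * (K + 3)); [lra|].
      assert (E : ((1 - c) * (K + 1) * L * (1 - a) - (K + 1) * l) * (2 * (K + 3)) =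
        (K + 1) * L * ((1 - c) * (1 - a) * (2 * (K + 3))) - 2 * ((K + 1) * l * (K + 3))) by ring.
      rewrite E.
      assert ((K + 1) * L * ((1 - c) * (1 - a) * (2 * (K + 3))) >= (K + 1) * L * 3).
      { assert (0 <= (K + 1) * L) by nra. nra. }
      nra.
    + apply Rle_ge.
      apply Rmult_le_reg_r with (2 * (K + 3)); [lra|].
      assert (E : (1 - c) * (1 - a) * K * (2 * L) * (2 * (K + 3)) =
        ((1 - c) * (1 - a) * (2 * (K + 3))) * (K * (2 * L))) by ring.
      rewrite E.
      assert (((1 - c) * (1 - a) * (2 * (K + 3))) * (K * (2 * L)) >= 3 * (K * (2 * L))).
      { assert (0 <= K * (2 * L)) by nra. nra. }
      assert (E2 : (1 + K * a) * ((K + 1) * l + Z) * (2 * (K + 3)) =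
        (1 + K * a) * (2 * ((K + 1) * l * (K + 3)) + Z * (2 * (K + 3)))) by ring.
      rewrite E2.
      assert (1 + K * a <= 1 + K) by nra.
      set (S := 2 * ((K + 1) * l * (K + 3)) + Z * (2 * (K + 3))).
      assert (HS : S <= 3 * L) by (unfold S; lra).
      assert (0 <= 1 + K * a) by nra.
      assert (0 <= K * (2 * L)) by nra.
      destruct (Rle_dec 0 S) as [HS0|HS0].
      * assert ((1 + K * a) * S <= (1 + K) * S) by (apply Rmult_le_compat_r; lra).
        assert ((1 + K) * S <= (1 + K) * (3 * L)) by (apply Rmult_le_compat_l; lra).
        nra.
      * assert ((1 + K * a) * S <= 0) by nra. nra.
Qed.
Lemma L_point (k n : nat) (P w : R) : (1 <= k)%nat ->
  INR n >= 4 * (INR k + 1) -> 0 <= w ->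
  2 * (ln (INR n) + w) / INR n <= P ->
  P <= 1 - INR (k + 1) * (ln (INR n) + w) / INR n ->
  0 <= F k n P <= exp (- (w / (2 * (INR k + 3)) - CC (INR k))).
Proof.
  intros hk hn hw hP1 hP2.
  rewrite plus_INR in hP2. simpl INR in hP2 at 2.
  set (K := INR k) in *.
  set (x := INR n) in *.
  assert (HK : 1 <= K) by (unfold K; replace 1 with (INR 1) by reflexivity; apply le_INR; lia).
  assert (Hx : 0 < x) by lra.
  set (l := ln x) in *.
  assert (Hl : 0 <= l).
  { unfold l. rewrite <- ln_1. apply ln_le; lra. }
  assert (Hl2 : l * l <= 4 * x).
  { destruct (Req_dec l 0) as [E|E]. { rewrite E. lra. }
    assert (H1 := exp_ineq1 (l / 2) ltac:(lra)).
    assert (H2 : exp (l / 2) * exp (l / 2) = x).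
    { rewrite <- exp_plus. replace (l / 2 + l / 2) with l by field. unfold l. apply exp_ln; lra. }
    nra. }
  set (L := l + w) in *.
  assert (HL : 0 <= L) by (unfold L; lra).
  set (c := (K + 1) / x).
  set (a := c * L).
  set (b := 2 * L / x).
  assert (Hcx : c * x = K + 1) by (unfold c; field; lra).
  assert (Ha : a = (K + 1) * L / x) by (unfold a, c; field; lra).
  assert (Hb : b = 2 * L / x) by reflexivity.
  fold b in hP1. rewrite <- Ha in hP2.
  assert (Hc0 : 0 <= c) by (unfold c; apply Rdiv_le_0_compat; lra).
  assert (Hc1 : c <= 1/4).
  { apply Rmult_le_reg_r with x; [lra|]. rewrite Hcx. lra. }
  assert (Hb0 : 0 <= b) by (unfold b; apply Rdiv_le_0_compat; lra).
  assert (Hbx : b * x = 2 * L) by (unfold b; field; lra).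
  assert (Hax : a * x = (K + 1) * L) by (rewrite Ha; field; lra).
  assert (Hba : b <= a).
  { apply Rmult_le_reg_r with x; [lra|]. rewrite Hbx, Hax. nra. }
  assert (Hab : a + b <= 1) by lra.
  assert (HA3 : c * (l + w) * (K + 3) <= K + 1).
  { fold L. fold a.
    assert ((a + b) * x <= x) by nra.
    assert (a * (K + 3) * x <= (K + 1) * x) by nra.
    apply Rmult_le_reg_r with x; lra. }
  assert (HA4 : c * l * l <= 4 * (K + 1)).
  { rewrite <- Hcx. replace (c * l * l) with (c * (l * l)) by ring.
    replace (4 * (c * x)) with (c * (4 * x)) by ring.
    apply Rmult_le_compat_l; lra. }
  destruct (L_ar K c l w HK (conj Hc0 Hc1) Hl hw HA3 HA4) as [R1 R2].
  fold L in R1, R2. fold a in R1, R2.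
  set (Z := w / (2 * (K + 3)) - CC K) in *.
  set (q := 1 - P).
  assert (Ha1 : a <= 1) by lra.
  assert (Hh := L_h k a b q hk Hb0 Hba Ha1 ltac:(unfold q; lra) ltac:(unfold q; lra)).
  set (h := q - q ^ (k + 1)) in *.
  fold K in Hh.
  assert (HD : 0 <= x - K - 1) by lra.
  assert (HDc : x - K - 1 = x * (1 - c)) by (rewrite Rmult_minus_distr_l, Rmult_1_r, Rmult_comm, Hcx; ring).
  assert (Key : (x - K - 1) * h >= (K + 1) * l + Z).
  { destruct Hh as [Hh|Hh].
    - assert ((x - K - 1) * h >= (x - K - 1) * (a * (1 - a))) by (apply Rle_ge, Rmult_le_compat_l; lra).
      assert (E : (x - K - 1) * (a * (1 - a)) = (1 - c) * (K + 1) * L * (1 - a)).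
      { rewrite HDc. replace (x * (1 - c) * (a * (1 - a))) with ((1 - c) * (a * x) * (1 - a)) by ring.
        rewrite Hax. ring. }
      lra.
    - assert (H1a : 0 < 1 + K * a) by nra.
      apply Rle_ge, Rmult_le_reg_l with (1 + K * a); [lra|].
      assert (E : (x - K - 1) * ((1 - a) * K * b) = (1 - c) * (1 - a) * K * (2 * L)).
      { rewrite HDc. replace (x * (1 - c) * ((1 - a) * K * b)) with ((1 - c) * (1 - a) * K * (b * x)) by ring.
        rewrite Hbx. ring. }
      assert ((x - K - 1) * ((1 + K * a) * h) >= (x - K - 1) * ((1 - a) * K * b))
        by (apply Rle_ge, Rmult_le_compat_l; lra).
      replace ((1 + K * a) * ((x - K - 1) * h)) with ((x - K - 1) * ((1 + K * a) * h)) by ring.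
      lra. }
  assert (Hkn : (k + 1 <= n)%nat).
  { apply INR_le. rewrite plus_INR. simpl (INR 1). fold K x. lra. }
  unfold F. fold x.
  replace (Z.of_nat n - Z.of_nat k - 1)%Z with (Z.of_nat (n - k - 1)) by lia.
  rewrite <- pow_powerRZ.
  assert (Hg : P + (1 - P) ^ (k + 1) = 1 - h) by (unfold h, q; ring).
  rewrite Hg.
  assert (Hq0 : 0 <= q) by (unfold q; lra).
  assert (Hg0 : 0 <= 1 - h).
  { rewrite <- Hg. assert (0 <= (1 - P) ^ (k + 1)) by (apply pow_le; lra). lra. }
  assert (Hge : 1 - h <= exp (- h)).
  { destruct (Req_dec h 0) as [E|E]. { rewrite E, Ropp_0, exp_0. lra. }
    assert (T := exp_ineq1 (- h) ltac:(lra)). lra. }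
  assert (Hm : INR (n - k - 1) = x - K - 1).
  { rewrite !minus_INR by lia. simpl (INR 1). reflexivity. }
  assert (Hxp : x ^ (k + 1) = exp ((K + 1) * l)).
  { unfold l. rewrite <- (exp_ln x) at 1 by lra. rewrite L_exp_pow, plus_INR. reflexivity. }
  rewrite Hxp.
  assert (P1 : (1 - h) ^ (n - k - 1) <= exp (- h) ^ (n - k - 1)) by (apply pow_incr; lra).
  rewrite L_exp_pow, Hm in P1.
  assert (P0 : 0 <= (1 - h) ^ (n - k - 1)) by (apply pow_le; lra).
  assert (E0 : 0 < exp ((K + 1) * l)) by apply exp_pos.
  split.
  - apply Rmult_le_pos; lra.
  - apply Rle_trans with (exp ((K + 1) * l) * exp ((x - K - 1) * - h)).
    + apply Rmult_le_compat_l; lra.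
    + rewrite <- exp_plus. assert (HH : (K + 1) * l + (x - K - 1) * - h <= - Z) by lra.
      destruct (Rle_lt_or_eq_dec _ _ HH) as [HH1|HH1].
      * left. apply exp_increasing. exact HH1.
      * rewrite HH1. lra.
Qed.

Theorem lemma2p9 (k : nat) (hk : (1 <= k)%nat) (p omega : nat -> R)
  (homega : is_lim_seq omega p_infty)
  (hp : exists N : nat, forall n : nat, (N <= n)%nat ->
      2 * (ln (INR n) + omega n) / INR n <= p n /\
      p n <= 1 - INR (k + 1) * (ln (INR n) + omega n) / INR n) :
  is_lim_seq (fun n : nat => F k n (p n)) 0.
Proof.
  apply is_lim_seq_spec. intros eps.
  apply is_lim_seq_spec in homega.
  set (K := INR k).
  assert (HK : 0 <= K) by apply pos_INR.
  destruct (homega (Rmax 0 (2 * (K + 3) * (CC K - ln eps + 1)))) as [N2 H2].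
  destruct hp as [N HN].
  exists (max N (max N2 (4 * k + 4))). intros n Hn.
  assert (Hw := H2 n ltac:(lia)).
  assert (Hw0 : 0 <= omega n) by (pose proof (Rmax_l 0 (2 * (K + 3) * (CC K - ln eps + 1))); lra).
  assert (Hw1 : 2 * (K + 3) * (CC K - ln eps + 1) < omega n)
    by (pose proof (Rmax_r 0 (2 * (K + 3) * (CC K - ln eps + 1))); lra).
  assert (Hx : INR n >= 4 * (INR k + 1)).
  { apply Rle_ge. replace (4 * (INR k + 1)) with (INR (4 * k + 4)).
    - apply le_INR. lia.
    - rewrite plus_INR, mult_INR. simpl. ring. }
  destruct (HN n ltac:(lia)) as [hp1 hp2].
  destruct (L_point k n (p n) (omega n) hk Hx Hw0 hp1 hp2) as [F0 F1].
  fold K in F1.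
  rewrite Rminus_0_r, Rabs_pos_eq by lra.
  apply Rle_lt_trans with (1 := F1).
  rewrite <- (exp_ln eps) by apply cond_pos.
  apply exp_increasing.
  assert (omega n / (2 * (K + 3)) > CC K - ln eps + 1).
  { apply Rmult_gt_reg_r with (2 * (K + 3)); [lra|].
    unfold Rdiv. rewrite Rmult_assoc, Rinv_l by lra. lra. }
  lra.
Qed.
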